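(* Consider the Online Submodular Bipartite Matching problem (defined in the context) with arbitrary arrival rates $r_v\in[0,1]$. Let $\mathbf{x}^*\in[0,1]^E$ be a feasible solution of the program: maximize $F(\mathbf{x})$ subject to $\sum_{e\in E(v)} x_e \le r_v$ for all $v\in V$, $\sum_{e\in E(u)} x_e\le 1$ for all $u\in U$, $0\le x_e\le 1$ for all $e\in E$, obtained by the continuous greedy algorithm so that $F(\mathbf{x}^* )\ge (1-1/e)\mathbb{E}[\mathrm{OPT}]$. Consider the online algorithm MMP-ALG: when $v$ arrives at time $t$, sample at most one edge $e\in E(v)$, each $e$ with probability $x^*_e/r_v$; if $e=(u,v)$ is sampled and $u$ is still available, match $e$, otherwise skip. Then MMP-ALG achieves a competitive ratio of at least $(1-1/e)^2$ when $|U|=o(\sqrt{T})$ and $T\to\infty$.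
   Context: Online Submodular Bipartite Matching (OSBM): we are given a bipartite graph $G=(U,V,E)$ with $m=|E|$, where $U$ are offline vertices and $V$ are online vertex types, a finite known horizon $T$, and a known probability distribution $\{p_v\}_{v\in V}$ with $\sum_{v} p_v \le 1$. In each round $t\in\{1,\dots,T\}$, independently across rounds, at most one vertex of $V$ arrives: $v$ arrives with probability $p_v$. Let $r_v = T p_v \in [0,1]$. When $v$ arrives, the algorithm must immediately and irrevocably either reject it or match it to a still available neighbor $u\in U$; each $u\in U$ has unit capacity. We have value-oracle access to a non-negative monotone submodular $f:2^E\to\mathbb{R}_{\ge0}$ with $f(\emptyset)=0$; the goal is to maximize $\mathbb{E}[f(\mathcal{M})]$ for the final set $\mathcal{M}$ of matched edges. $\mathbb{E}[\mathrm{OPT}]$ is the expectation over arrival sequences $S$ of the maximum of $f$ over feasible hindsight matchings for $S$; the competitive ratio of ALG is the minimum over instances of $\mathbb{E}[\mathrm{ALG}]/\mathbb{E}[\mathrm{OPT}]$. For $w\in U\cup V$, $E(w)$ is the set of edges incident to $w$. $F:[0,1]^E\to\mathbb{R}_{\ge0}$ is the multilinear extension of $f$: $F(\mathbf{x})=\sum_{S\subseteq E}\prod_{e\in S}x_e\prod_{e\notin S}(1-x_e) f(S)$, i.e. the expected value of $f$ on a random set containing each $e$ independently with probability $x_e$. *)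

(* Defs.v *)
From HB Require Import structures.
From mathcomp Require Import all_boot all_order all_algebra.
From mathcomp Require Import reals.
From mathcomp.analysis Require Import sequences exp.
Set Implicit Arguments. Unset Strict Implicit. Unset Printing Implicit Defensive.
Import Order.TTheory GRing.Theory Num.Theory.
Local Open Scope ring_scope.

(* A bipartite graph G = (U, V, E): offline vertices U, online types V,
   edges Ed, with endpoint maps eu : Ed -> U, ev : Ed -> V
   (the graph is simple: e |-> (eu e, ev e) is injective). *)

Section OSBM.
Variables (R : realType) (U V Ed : finType) (eu : Ed -> U) (ev : Ed -> V).

Definition monotone_submodular (f : {set Ed} -> R) : Prop :=
  [/\ f set0 = 0,
      (forall A, 0 <= f A),
      (forall A B : {set Ed}, A \subset B -> f A <= f B) &
      (forall A B : {set Ed}, f (A :|: B) + f (A :&: B) <= f A + f B)].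

Definition multilinear (f : {set Ed} -> R) (x : Ed -> R) : R :=
  \sum_(S : {set Ed})
     ((\prod_(e in S) x e) * (\prod_(e in ~: S) (1 - x e))) * f S.

(* feasibility for the LP with r_v = T p_v *)
Definition lp_feasible (T : nat) (p : V -> R) (x : Ed -> R) : Prop :=
  [/\ (forall e, 0 <= x e <= 1),
      (forall v, \sum_(e | ev e == v) x e <= T%:R * p v) &
      (forall u, \sum_(e | eu e == u) x e <= 1)].

(* one round: None = no arrival, Some v = type v arrives *)
Definition arrival_prob (p : V -> R) (a : option V) : R :=
  match a with None => 1 - \sum_v p v | Some v => p v end.

Definition seq_prob (T : nat) (p : V -> R) (s : {ffun 'I_T -> option V}) : R :=
  \prod_(t < T) arrival_prob p (s t).

Definition hindsight_feasible (T : nat) (s : {ffun 'I_T -> option V})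
  (M : {set Ed}) : bool :=
  [forall u, #|[set e in M | eu e == u]| <= 1]%N &&
  [forall v, #|[set e in M | ev e == v]| <= #|[set t | s t == Some v]|]%N.

Definition OPT (f : {set Ed} -> R) (T : nat) (s : {ffun 'I_T -> option V}) : R :=
  \big[Num.max/0]_(M : {set Ed} | hindsight_feasible s M) f M.

Definition E_OPT (f : {set Ed} -> R) (T : nat) (p : V -> R) : R :=
  \sum_(s : {ffun 'I_T -> option V}) seq_prob p s * OPT f s.

Definition sample_prob (T : nat) (p : V -> R) (x : Ed -> R)
  (a : option V) (c : option Ed) : R :=
  match a, c with
  | None, None => 1
  | None, Some _ => 0
  | Some v, Some e => if ev e == v then x e / (T%:R * p v) else 0
  | Some v, None => 1 - \sum_(e | ev e == v) x e / (T%:R * p v)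
  end.

Definition alg_step (M : {set Ed}) (a : option V) (c : option Ed) : {set Ed} :=
  match a, c with
  | Some v, Some e =>
      if (ev e == v) && [forall e' in M, eu e' != eu e] then e |: M else M
  | _, _ => M
  end.

Definition alg_run (T : nat) (s : {ffun 'I_T -> option V})
  (c : {ffun 'I_T -> option Ed}) : {set Ed} :=
  foldl (fun M t => alg_step M (s t) (c t)) set0 (enum 'I_T).

Definition E_ALG (f : {set Ed} -> R) (T : nat) (p : V -> R) (x : Ed -> R) : R :=
  \sum_(s : {ffun 'I_T -> option V}) \sum_(c : {ffun 'I_T -> option Ed})
     (\prod_(t < T) (arrival_prob p (s t) * sample_prob T p x (s t) (c t)))
       * f (alg_run s c).

End OSBM.

(* Main.v *)
Require Import Defs.
From HB Require Import structures.
From mathcomp Require Import all_boot all_order all_algebra.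
From mathcomp Require Import reals.
From mathcomp.analysis Require Import sequences exp.
From mathcomp Require Import ring lra.
Set Implicit Arguments. Unset Strict Implicit. Unset Printing Implicit Defensive.
Import Order.TTheory GRing.Theory Num.Theory.
Local Open Scope ring_scope.




Section ExSec.
Variables (R : realType) (Ed : finType).

Definition wgt (y : Ed -> R) (S : {set Ed}) : R :=
  \prod_i (if i \in S then y i else 1 - y i).
Definition Ex (y : Ed -> R) (g : {set Ed} -> R) : R := \sum_S wgt y S * g S.

Lemma wgt_ge0 y S : (forall i, 0 <= y i <= 1) -> 0 <= wgt y S.
Proof.
move=> hy; apply: prodr_ge0 => i _; have /andP[h0 h1] := hy i.
by case: (i \in S); rewrite ?subr_ge0.
Qed.

Lemma Ex_const y c : Ex y (fun _ => c) = c.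
Proof.
rewrite /Ex -mulr_suml.
have := @bigA_distr R 0 1 *%R +%R Ed y (fun i => 1 - y i).
rewrite /wgt => <-.
by rewrite (eq_bigr (fun _ => 1)) ?big1_eq ?mul1r // => i _; change (y i + (1 - y i) = 1); rewrite addrCA subrr addr0.
Qed.

Lemma ExD y g1 g2 : Ex y (fun S => g1 S + g2 S) = Ex y g1 + Ex y g2.
Proof. by rewrite /Ex -big_split; apply: eq_bigr => S _; rewrite mulrDr. Qed.

Lemma ExZ y c g : Ex y (fun S => c * g S) = c * Ex y g.
Proof. by rewrite /Ex mulr_sumr; apply: eq_bigr => S _; rewrite mulrCA. Qed.

Lemma ExN y g : Ex y (fun S => - g S) = - Ex y g.
Proof. by rewrite /Ex -sumrN; apply: eq_bigr => S _; rewrite mulrN. Qed.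

Lemma Ex_sum (I : finType) (P : pred I) y (g : I -> {set Ed} -> R) :
  Ex y (fun S => \sum_(i | P i) g i S) = \sum_(i | P i) Ex y (g i).
Proof.
rewrite /Ex exchange_big /=; apply: eq_bigr => S _; by rewrite mulr_sumr.
Qed.

Lemma Ex_le y g1 g2 : (forall i, 0 <= y i <= 1) ->
  (forall S, g1 S <= g2 S) -> Ex y g1 <= Ex y g2.
Proof.
move=> hy hg; apply: ler_sum => S _; apply: ler_wpM2l; first exact: wgt_ge0.
exact: hg.
Qed.

Lemma wgt_split y e (S : {set Ed}) : e \notin S -> y e * wgt y S = (1 - y e) * wgt y (e |: S).
Proof.
move=> eS; rewrite /wgt (bigD1 e) //= (bigD1 e (P := predT)) //= (negbTE eS) setU11.
rewrite [in RHS](eq_bigr (fun i => if i \in S then y i else 1 - y i)).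
  by rewrite mulrCA.
by move=> i ie; rewrite in_setU1 (negbTE ie).
Qed.

Lemma setU1_id (e : Ed) (S : {set Ed}) : e \in S -> e |: S = S.
Proof. by move=> eS; apply/setUidPr; rewrite sub1set. Qed.

Lemma Ex_in y e g :
  Ex y (fun S => (e \in S)%:R * g S) = y e * Ex y (fun S => g (e |: S)).
Proof.
rewrite /Ex mulr_sumr (bigID (fun S : {set Ed} => e \in S)) /=.
rewrite [X in _ = X](bigID (fun S : {set Ed} => e \in S)) /=.
rewrite [X in _ + X]big1; last by move=> S /negbTE ->; rewrite mul0r mulr0.
rewrite addr0.
have -> : \sum_(S : {set Ed} | e \notin S) y e * (wgt y S * g (e |: S)) =
          \sum_(S : {set Ed} | e \in S) (1 - y e) * (wgt y S * g S).
  rewrite (reindex_onto (fun S => S :\ e) (fun S => e |: S)) /=; last first.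
    by move=> S eS; rewrite setU1K.
  apply: eq_big => S.
    rewrite !inE eqxx /=; apply/idP/idP => [/eqP <-|eS]; first exact: setU11.
    by rewrite setD1K.
  move=> /andP[_ /eqP eS]; have eS' : e \in S by rewrite -eS setU11.
  rewrite eS mulrA wgt_split ?setD11 // setD1K // mulrA //.
rewrite -big_split /=; apply: eq_bigr => S eS.
by rewrite eS mul1r setU1_id // -mulrDl addrCA subrr addr0 mul1r.
Qed.

Lemma Ex_ext y g1 g2 : (forall S, g1 S = g2 S) -> Ex y g1 = Ex y g2.
Proof. by move=> h; apply: eq_bigr => S _; rewrite h. Qed.

End ExSec.



Lemma sub_add (R : realType) (Ed : finType) (f : {set Ed} -> R) :
  monotone_submodular f -> forall B C : {set Ed},
  f (B :|: C) <= f B + \sum_(e in C) (f (e |: B) - f B).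
Proof.
case=> f0 fge0 fmon fsub B C.
elim: {C}_.+1 {-2}C (ltnSn #|C|) => // n IH C hC.
have [->|/set0Pn[e eC]] := eqVneq C set0.
  by rewrite setU0 big_pred0 ?addr0 // => i; rewrite inE.
rewrite (bigD1 e) //=.
have hC' : (#|C :\ e| < n)%N.
  by rewrite (cardsD1 e C) eC in hC.
have IH' := IH _ hC'.
have e1 : (B :|: C :\ e) :|: (e |: B) = B :|: C.
  apply/setP => i; rewrite !inE; case: (i =P e) => [->|_]; rewrite ?eC ?orbT //=.
  by case: (i \in B); rewrite //= orbF.
have e2 : (B :|: C :\ e) :&: (e |: B) = B.
  apply/setP => i; rewrite !inE; case: (i =P e) => [->|_] /=.
    by case: (e \in B).
  by case: (i \in B); rewrite ?andbF.
have := fsub (B :|: C :\ e) (e |: B); rewrite e1 e2.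
have -> : \sum_(i in C | i != e) (f (i |: B) - f B) =
          \sum_(i in C :\ e) (f (i |: B) - f B).
  by apply: eq_bigl => i; rewrite !inE andbC.
lra.
Qed.



Section Qsec.
Variables (R : realType) (U V Ed : finType) (eu : Ed -> U) (ev : Ed -> V).
Variables (f : {set Ed} -> R) (x : Ed -> R).
Hypothesis hf : monotone_submodular f.
Hypothesis hx : forall e, 0 <= x e <= 1.
Hypothesis hu : forall u, \sum_(e | eu e == u) x e <= 1.

Definition ufree (A : {set Ed}) u := [forall e' in A, eu e' != u].
Definition fr (A : {set Ed}) e := ufree A (eu e).
Definition nxt (A : {set Ed}) e := if fr A e then e |: A else A.
Definition FrS (A : {set Ed}) := [set e | fr A e].
Definition Q (A : {set Ed}) := Ex x (fun S => f (A :|: (S :&: FrS A))).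

Lemma fmono (A B : {set Ed}) : A \subset B -> f A <= f B.
Proof. by case: hf => _ _ h _; apply: h. Qed.

Lemma fr_U1 e (A : {set Ed}) i : fr (e |: A) i = (eu e != eu i) && fr A i.
Proof.
apply/idP/idP.
  move=> /forall_inP H; apply/andP; split; first exact: H (setU11 _ _).
  by apply/forall_inP => e' he'; apply: H; rewrite setU1r.
case/andP=> h1 /forall_inP h2; apply/forall_inP => e' /setU1P [->|] //.
exact: h2.
Qed.

Lemma lemma_i (A : {set Ed}) : Q A - f A <= \sum_e x e * (f (nxt A e) - f A).
Proof.
have -> : Q A - f A = Ex x (fun S => f (A :|: (S :&: FrS A)) + - f A).
  by rewrite ExD Ex_const.
apply: (@le_trans _ _ (Ex x (fun S => \sum_e (e \in S)%:R * (f (nxt A e) - f A)))).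
  apply: Ex_le => // S.
  have := sub_add hf A (S :&: FrS A).
  rewrite big_mkcond /=.
  have -> : \sum_i (if i \in S :&: FrS A then f (i |: A) - f A else 0) =
            \sum_e (e \in S)%:R * (f (nxt A e) - f A).
    apply: eq_bigr => e _; rewrite !inE /nxt.
    by case: (e \in S); case: (fr A e); rewrite ?mul1r ?mul0r ?subrr.
  lra.
rewrite Ex_sum; apply: ler_sum => e _.
by rewrite Ex_in Ex_const.
Qed.


Lemma fge0' (A : {set Ed}) : 0 <= f A.
Proof. by case: hf. Qed.

Lemma lemma_iiu (A : {set Ed}) u : ufree A u ->
  0 <= \sum_(e | eu e == u) x e * (Q (e |: A) - Q A).
Proof.
move=> hfree.
pose B (S : {set Ed}) := A :|: [set i | (i \in S) && fr A i && (eu i != u)].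
pose g e S := f (e |: B S) - f (B S).
have F1 : forall e S, eu e == u ->
    (e |: A) :|: (S :&: FrS (e |: A)) = e |: B S.
  move=> e S /eqP he; apply/setP => i; rewrite !inE fr_U1 he.
  case: (i =P e) => [->|_] //=; rewrite eq_sym.
  by case: (i \in A); case: (i \in S); case: (fr A i); case: (eu i == u).
have F2 : forall S, A :|: (S :&: FrS A) = B S :|: (S :&: [set e | eu e == u]).
  move=> S; apply/setP => i; rewrite !inE.
  case hiu: (eu i == u); rewrite /= ?andbT ?andbF.
    have -> : fr A i by rewrite /fr (eqP hiu).
    by case: (i \in A); case: (i \in S).
  by case: (i \in A); case: (i \in S); case: (fr A i).
have F3 : forall e S, eu e == u -> B (e |: S) = B S.
  move=> e S /eqP he; apply/setP => i; rewrite !inE.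
  case: (i =P e) => [->|_] //=; rewrite he eqxx.
  by case: (e \in A); rewrite ?andbF.
have gge0 : forall e S, 0 <= g e S.
  by move=> e S; rewrite subr_ge0; apply: fmono; rewrite subsetUr.
pose K := \sum_(e | eu e == u) x e * Ex x (g e).
have hQA : Q A <= Ex x (fun S => f (B S)) + K.
  rewrite /Q (Ex_ext _ (fun S => congr1 f (F2 S))).
  apply: (@le_trans _ _ (Ex x (fun S => f (B S) +
      \sum_(e | eu e == u) (e \in S)%:R * g e S))).
    apply: Ex_le => // S; have := sub_add hf (B S) (S :&: [set e | eu e == u]).
    rewrite big_mkcond /=.
    have -> : \sum_i (if i \in S :&: [set e | eu e == u] then f (i |: B S) - f (B S) else 0)
              = \sum_(e | eu e == u) (e \in S)%:R * g e S.
      rewrite [RHS]big_mkcond; apply: eq_bigr => e _; rewrite !inE.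
      by case: (e \in S); case: (eu e == u); rewrite ?mul1r ?mul0r.
    done.
  rewrite ExD Ex_sum /K; apply: lerD => //; apply: ler_sum => e he.
  by rewrite Ex_in (Ex_ext _ (fun S => congr1 (fun Z => f (e |: Z) - f Z) (F3 e S he))).
have hQe : forall e, eu e == u -> Q (e |: A) = Ex x (fun S => f (B S)) + Ex x (g e).
  move=> e he; rewrite /Q (Ex_ext _ (fun S => congr1 f (F1 e S he))) -ExD.
  by apply: Ex_ext => S; rewrite /g addrC subrK.
have Kge0 : 0 <= K.
  apply: sumr_ge0 => e _; apply: mulr_ge0; first by case/andP: (hx e).
  by rewrite -(Ex_const x 0); apply: Ex_le.
apply: (@le_trans _ _ (\sum_(e | eu e == u) x e * (Ex x (g e) - K))).
  under eq_bigr do rewrite mulrBr.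
  rewrite sumrB -mulr_suml -/K; have hX := hu u; nra.
apply: ler_sum => e he; apply: ler_wpM2l; first by case/andP: (hx e).
rewrite hQe //; lra.
Qed.

Lemma lemma_ii (A : {set Ed}) : 0 <= \sum_e x e * (Q (nxt A e) - Q A).
Proof.
rewrite (partition_big eu xpredT) //=; apply: sumr_ge0 => u _.
case hfu: (ufree A u).
  apply: (le_trans (lemma_iiu hfu)); rewrite le_eqVlt; apply/orP; left; apply/eqP.
  apply: eq_bigr => e he; rewrite /nxt /fr (eqP he) hfu //.
rewrite big1 // => e he; rewrite /nxt /fr (eqP he) hfu subrr mulr0 //.
Qed.

End Qsec.



Definition fcons (X : finType) k (a : X) (s : {ffun 'I_k -> X}) : {ffun 'I_k.+1 -> X} :=
  [ffun i => if unlift ord0 i is Some j then s j else a].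

Lemma fcons0 (X : finType) k a (s : {ffun 'I_k -> X}) : fcons a s ord0 = a.
Proof. by rewrite ffunE unlift_none. Qed.

Lemma fconsS (X : finType) k a (s : {ffun 'I_k -> X}) j : fcons a s (lift ord0 j) = s j.
Proof. by rewrite ffunE liftK. Qed.

Lemma sum_ffunS (R : realType) (X : finType) k (G : {ffun 'I_k.+1 -> X} -> R) :
  \sum_s G s = \sum_a \sum_(s : {ffun 'I_k -> X}) G (fcons a s).
Proof.
rewrite pair_big /=.
rewrite (reindex (fun p : X * {ffun 'I_k -> X} => fcons p.1 p.2)) //=.
exists (fun s : {ffun 'I_k.+1 -> X} => (s ord0, [ffun j => s (lift ord0 j)])).
  move=> [a s] _ /=; rewrite fcons0; congr pair; apply/ffunP => j.
  by rewrite ffunE fconsS.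
move=> s _ /=; apply/ffunP => i; rewrite ffunE.
by case: unliftP => [j ->|->]; rewrite ?ffunE.
Qed.

Lemma sum_ffun0 (R : realType) (X : finType) (G : {ffun 'I_0 -> X} -> R) s0 :
  \sum_s G s = G s0.
Proof.
rewrite (eq_bigr (fun _ => G s0)); last first.
  move=> s _; congr G; apply/ffunP => i; case: i => //.
by rewrite sumr_const card_ffun card_ord expn0.
Qed.

Lemma foldl_map' (T1 T2 S : Type) (g : S -> T2 -> S) (h : T1 -> T2) z l :
  foldl g z (map h l) = foldl (fun z t => g z (h t)) z l.
Proof. by elim: l z => //= a l IH z; rewrite IH. Qed.

Lemma foldl_ext (T1 S : Type) (g1 g2 : S -> T1 -> S) :
  (forall z t, g1 z t = g2 z t) -> forall z l, foldl g1 z l = foldl g2 z l.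
Proof. by move=> h z l; elim: l z => //= a l IH z; rewrite h IH. Qed.

Lemma sum_option (R : realType) (X : finType) (F : option X -> R) :
  \sum_a F a = F None + \sum_v F (Some v).
Proof.
rewrite (bigD1 None) //=; congr (_ + _).
rewrite (reindex_omap Some id) //=; last by case.
by apply: eq_bigl => v; rewrite eqxx.
Qed.

Section AlgSec.
Variables (R : realType) (U V Ed : finType) (eu : Ed -> U) (ev : Ed -> V).
Variables (T : nat) (p : V -> R) (f : {set Ed} -> R) (x : Ed -> R).

Definition wt a c := arrival_prob p a * sample_prob ev T p x a c.

Definition Alg k (A : {set Ed}) :=
  \sum_(s : {ffun 'I_k -> option V}) \sum_(c : {ffun 'I_k -> option Ed})
    (\prod_(t < k) wt (s t) (c t)) *
      f (foldl (fun M t => alg_step eu ev M (s t) (c t)) A (enum 'I_k)).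

Lemma Alg0 A : Alg 0 A = f A.
Proof.
rewrite /Alg (sum_ffun0 _ [ffun i => None]) (sum_ffun0 _ [ffun i => None]).
by rewrite big_ord0 mul1r enum_ord0.
Qed.

Lemma AlgS k A : Alg k.+1 A =
  \sum_a \sum_c wt a c * Alg k (alg_step eu ev A a c).
Proof.
rewrite /Alg sum_ffunS; apply: eq_bigr => a _.
under eq_bigr => s _ do rewrite sum_ffunS.
rewrite exchange_big /=; apply: eq_bigr => c0 _.
rewrite mulr_sumr; apply: eq_bigr => s _.
rewrite mulr_sumr; apply: eq_bigr => c _.
rewrite big_ord_recl fcons0 fcons0 mulrA; congr (_ * f _).
  by congr (_ * _); apply: eq_bigr => i _; rewrite !fconsS.
rewrite enum_ordSl /= fcons0 fcons0 foldl_map'.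
by apply: foldl_ext => M t; rewrite !fconsS.
Qed.

Lemma one_step (G : {set Ed} -> R) A :
  (0 < T)%N -> (forall v, 0 <= p v) -> lp_feasible eu ev T p x ->
  \sum_a \sum_c wt a c * G (alg_step eu ev A a c) =
  (1 - (\sum_e x e) / T%:R) * G A + \sum_e (x e / T%:R) * G (nxt eu A e).
Proof.
move=> hT hp [hx hv hu].
have Tn0 : (T%:R : R) != 0 by rewrite pnatr_eq0 -lt0n.
have hN : \sum_c wt None c * G (alg_step eu ev A None c) = (1 - \sum_v p v) * G A.
  rewrite sum_option big1 ?addr0 /wt /= ?mulr1 // => e _; by rewrite mulr0 mul0r.
have hS : forall v, \sum_c wt (Some v) c * G (alg_step eu ev A (Some v) c) =
    p v * G A - \sum_(e | ev e == v) (x e / T%:R) * G A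
    + \sum_(e | ev e == v) (x e / T%:R) * G (nxt eu A e).
  move=> v; rewrite sum_option /wt /=.
  have [pv0|pvn0] := eqVneq (p v) 0.
    have hx0 : forall e, ev e == v -> x e = 0.
      have := hv v; rewrite pv0 mulr0 => hle.
      have : \sum_(e | ev e == v) x e == 0.
        by rewrite eq_le hle /=; apply: sumr_ge0 => e _; case/andP: (hx e).
      move=> /eqP hs e he; apply: (psumr_eq0P _ hs) => // i _; by case/andP: (hx i).
    rewrite pv0 !mul0r add0r big1 => [|e _]; last by rewrite !mul0r.
    rewrite big1 => [|e he]; last by rewrite hx0 // !mul0r.
    rewrite big1 => [|e he]; last by rewrite hx0 // !mul0r.
    by rewrite subr0 addr0.
  congr (_ + _).
    rewrite mulrBr mulr1 mulrBl mulr_sumr mulr_suml; congr (_ - _).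
    by apply: eq_bigr => e _; field; apply/andP; split.
  rewrite [RHS]big_mkcond; apply: eq_bigr => e _.
  case: (ev e == v) => /=; last by rewrite mulr0 mul0r.
  rewrite /nxt /fr /ufree; congr (_ * _); field; apply/andP; split => //.
rewrite sum_option hN (eq_bigr _ (fun v _ => hS v)) big_split /= sumrB.
have part : forall F : Ed -> R, \sum_v \sum_(e | ev e == v) F e = \sum_e F e.
  by move=> F; rewrite [RHS](partition_big ev xpredT).
rewrite !part -mulr_suml -mulr_suml -mulr_suml; ring.
Qed.

End AlgSec.



Section MainSec.
Variables (R : realType) (U V Ed : finType) (eu : Ed -> U) (ev : Ed -> V).
Variables (T : nat) (p : V -> R) (f : {set Ed} -> R) (x : Ed -> R).
Hypothesis hT : (0 < T)%N.
Hypothesis hp : forall v, 0 <= p v.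
Hypothesis hsp : \sum_v p v <= 1.
Hypothesis hf : monotone_submodular f.
Hypothesis hlp : lp_feasible eu ev T p x.

Definition beta k : R := 1 - (1 - T%:R^-1) ^+ k.

Lemma Tpos : (0 : R) < T%:R.
Proof. by rewrite ltr0n. Qed.

Lemma q_range : 0 <= 1 - (T%:R : R)^-1 <= 1.
Proof.
have hT1 : (1 : R) <= T%:R by rewrite ler1n.
apply/andP; split.
  by rewrite subr_ge0 invf_le1 // Tpos.
by rewrite lerBlDr lerDl invr_ge0 ltW // Tpos.
Qed.

Lemma beta_range k : 0 <= beta k <= 1.
Proof.
have /andP[q0 q1] := q_range.
rewrite /beta; apply/andP; split.
  by rewrite subr_ge0 exprn_ile1.
by rewrite lerBlDr lerDl exprn_ge0.
Qed.

Lemma St_le : \sum_e x e <= T%:R.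
Proof.
case: hlp => hx hv hu.
rewrite (partition_big ev xpredT) //=.
apply: (@le_trans _ _ (\sum_v T%:R * p v)).
  by apply: ler_sum => v _; apply: (le_trans _ (hv v)); rewrite le_eqVlt eqxx.
by rewrite -mulr_sumr ler_piMr // ltW // Tpos.
Qed.

Lemma main_bound k A :
  f A + beta k * (Q eu f x A - f A) <= Alg eu ev T p f x k A.
Proof.
case: hlp => hx hv hu.
elim: k A => [|k IH] A.
  by rewrite Alg0 /beta expr0 subrr mul0r addr0.
rewrite AlgS one_step //.
set St := \sum_e x e.
set b := beta k.
set D := Q eu f x A - f A.
set s1 := \sum_e x e * (f (nxt eu A e) - f A).
set s2 := \sum_e x e * (Q eu f x (nxt eu A e) - Q eu f x A).
have hs1 : D <= s1 := lemma_i eu hf hx A.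
have hs2 : 0 <= s2 := lemma_ii hf hx hu A.
have /andP[b0 b1] := beta_range k.
have Tp := Tpos.
have c0 : 0 <= 1 - St / T%:R.
  by rewrite subr_ge0 ler_pdivrMr // mul1r St_le.
apply: (@le_trans _ _ ((1 - St / T%:R) * (f A + b * D) +
   \sum_e (x e / T%:R) * (f (nxt eu A e) + b * (Q eu f x (nxt eu A e) - f (nxt eu A e))))).
  have -> : (1 - St / T%:R) * (f A + b * D) +
   \sum_e (x e / T%:R) * (f (nxt eu A e) + b * (Q eu f x (nxt eu A e) - f (nxt eu A e)))
   = f A + b * D + ((1 - b) * s1 + b * s2) / T%:R.
    have -> : \sum_e (x e / T%:R) * (f (nxt eu A e) + b * (Q eu f x (nxt eu A e) - f (nxt eu A e)))
      = St / T%:R * (f A + b * D) + ((1 - b) * s1 + b * s2) / T%:R.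
      rewrite /s1 /s2 /St /D !mulr_sumr -big_split /= !mulr_suml -big_split /=.
      apply: eq_bigr => e _; field; by rewrite lt0r_neq0.
    ring.
  have -> : beta k.+1 = b + (1 - b) / T%:R.
    rewrite /b /beta exprS; field; by rewrite lt0r_neq0.
  have h1 : (1 - b) * D <= (1 - b) * s1 + b * s2.
    rewrite -[X in X <= _]addr0; apply: lerD; last exact: mulr_ge0.
    by apply: ler_wpM2l => //; rewrite subr_ge0.
  have h2 : (1 - b) * D / T%:R <= ((1 - b) * s1 + b * s2) / T%:R.
    by apply: ler_wpM2r => //; rewrite invr_ge0 ltW.
  have -> : f A + (b + (1 - b) / T%:R) * (Q eu f x A - f A) =
            f A + b * D + (1 - b) * D / T%:R by rewrite /D; ring.
  by rewrite lerD2l.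
apply: lerD; first by apply: ler_wpM2l => //; apply: IH.
apply: ler_sum => e _; apply: ler_wpM2l; last exact: IH.
by apply: divr_ge0; [case/andP: (hx e) | apply: ltW].
Qed.

End MainSec.

Unset Implicit Arguments. Set Strict Implicit.



Lemma ml_Ex (R : realType) (Ed : finType) (f : {set Ed} -> R) x :
  multilinear f x = Ex x f.
Proof.
apply: eq_bigr => S _; congr (_ * _).
rewrite /wgt [RHS](bigID (fun i => i \in S)) /=; congr (_ * _).
  by apply: eq_bigr => i ->.
rewrite [LHS](eq_bigl (fun i => i \notin S)); last by move=> i; rewrite in_setC.
by apply: eq_bigr => i /negbTE ->.
Qed.

Lemma beta_ge (R : realType) (T : nat) : (0 < T)%N ->
  1 - expR (-1) <= beta R T T.
Proof.
move=> hT; rewrite /beta lerD2l lerN2.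
have Tp : (0 : R) < T%:R by rewrite ltr0n.
have /andP[q0 q1] := q_range R hT.
have h1 : 1 - (T%:R : R)^-1 <= expR (- (T%:R^-1)).
  by have := expR_ge1Dx (- (T%:R : R)^-1).
apply: (le_trans (lerXn2r T _ _ h1)); rewrite ?nnegrE ?expR_ge0 //.
rewrite -expRM_natl mulrN mulfV ?lt0r_neq0 //.
Qed.

Lemma E_OPT_ge0 (R : realType) (U V Ed : finType) (eu : Ed -> U) (ev : Ed -> V)
  (f : {set Ed} -> R) (T : nat) (p : V -> R) :
  (forall v, 0 <= p v) -> \sum_v p v <= 1 -> E_OPT eu ev f T p >= 0.
Proof.
move=> hp hsp; apply: sumr_ge0 => s _; apply: mulr_ge0.
  apply: prodr_ge0 => t _; case: (s t) => [v|] //=; by rewrite subr_ge0.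
exact: bigmax_ge_id.
Qed.



Theorem theorem2 (R : realType) (eps : R) :
  0 < eps ->
  exists (delta : R) (T0 : nat), 0 < delta /\
  forall (U V Ed : finType) (eu : Ed -> U) (ev : Ed -> V)
         (T : nat) (p : V -> R) (f : {set Ed} -> R) (x : Ed -> R),
    injective (fun e => (eu e, ev e)) ->
    (forall v, 0 <= p v) -> \sum_v p v <= 1 ->
    (forall v, T%:R * p v <= 1) ->
    monotone_submodular f ->
    lp_feasible eu ev T p x ->
    multilinear f x >= (1 - expR (-1)) * E_OPT eu ev f T p ->
    (T0 <= T)%N ->
    (#|U| ^ 2)%:R <= delta * T%:R ->
    E_ALG eu ev f T p x >= ((1 - expR (-1)) ^+ 2 - eps) * E_OPT eu ev f T p.
Proof.
move=> eps0; exists 1, 1%N; split => // U V Ed eu ev T p f x _ hp hsp _ hf hlp hF hT _.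
have hmb := @main_bound R U V Ed eu ev T p f x hT hp hsp hf hlp T set0.
have hE : E_ALG eu ev f T p x = Alg eu ev T p f x T set0 by [].
have f0 : f set0 = 0 by case: hf.
have hx : forall e, 0 <= x e <= 1 by case: hlp.
have hQ0 : Q eu f x set0 = multilinear f x.
  rewrite ml_Ex /Q; apply: Ex_ext => S; congr f; apply/setP => e.
  have he : e \in FrS eu set0 by rewrite inE; apply/forall_inP => e'; rewrite inE.
  by rewrite in_setU in_set0 in_setI he andbT.
have Fx0 : 0 <= multilinear f x.
  rewrite ml_Ex -(Ex_const x 0); apply: Ex_le => // S; by case: hf.
have c0 : 0 <= 1 - expR (-1 : R) by rewrite subr_ge0 expR_le1 lerN10.
have Eo : 0 <= E_OPT eu ev f T p by apply: E_OPT_ge0.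
have hb := beta_ge R T hT.
rewrite hQ0 f0 add0r subr0 in hmb.
rewrite hE; apply: le_trans hmb.
apply: (@le_trans _ _ ((1 - expR (-1)) * multilinear f x)); last first.
  by apply: ler_wpM2r.
apply: (@le_trans _ _ ((1 - expR (-1)) * ((1 - expR (-1)) * E_OPT eu ev f T p))); last first.
  by apply: ler_wpM2l.
rewrite mulrA -expr2 mulrBl lerBlDr lerDl.
by apply: mulr_ge0 => //; apply: ltW.
Qed.
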